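(* Let $\mathcal M$ be a mixture of $L$ Markov chains on $n$ states such that $s^\ell_j>0$ for all $\ell,j$, the matrices $P_j$ and $M^+_j$ have rank $L$ for all $j$, $\mathcal M$ is companion-connected, and the co-kernel of $\mathcal A=\mathcal A(P_1,\dots,P_n,Q_1,\dots,Q_n)$ is spanned by the indicator vectors $\xi^\ell_C$ ($\ell\in[L]$, $C\in\mathcal C^\ell$). Let $P'_j,Q'_j$, $\mathcal A'$ and $Y'_j,Z'_j\in\mathbb R^{r\times L}$ be as defined in the context (for an arbitrary choice of basis of the co-kernel of $\mathcal A'$). Then for any states $i,j\in[n]$: $\Xi_i=\Xi_j$ (i.e. $i$ and $j$ lie in the same connected component in every chain) if and only if the $r\times r$ matrix $(Z'_j\overline{Y'_j})^\dagger(Z'_i\overline{Y'_i})$ has rank $L$ and is the Moore–Penrose pseudoinverse of $(Z'_i\overline{Y'_i})^\dagger(Z'_j\overline{Y'_j})$.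
   Context: A mixture of $L$ Markov chains on $[n]$: row-stochastic $M^1,\dots,M^L\in\mathbb R^{n\times n}$ and starting vectors $s^\ell\in\mathbb R^n_{\ge0}$ with $\sum_{\ell,i}s^\ell_i=1$; 3-trail distribution $p(i,j,k)=\sum_\ell s^\ell_iM^\ell_{ij}M^\ell_{jk}$; $O_j\in\mathbb R^{n\times n}$, $O_j(i,k)=p(i,j,k)$. $P_j,Q_j,M^+_j\in\mathbb R^{L\times n}$: $P_j(\ell,i)=s^\ell_iM^\ell_{ij}$, $Q_j(\ell,k)=s^\ell_jM^\ell_{jk}$, $M^+_j(\ell,k)=M^\ell_{jk}$. $\overline A$ denotes the transpose, $A^\dagger$ the pseudoinverse. Shuffle matrix $\mathcal A(P_1,\dots,P_n,Q_1,\dots,Q_n)\in\mathbb R^{2Ln\times n^2}$: rows indexed by $(j,\ell,\pm)\in[n]\times[L]\times\{+,-\}$, columns by $(i,j)\in[n]^2$, with $\mathcal A_{(j,\ell,+),(i,j)}=P_j(\ell,i)$, $\mathcal A_{(i,\ell,-),(i,j)}=-Q_i(\ell,j)$, all other entries $0$. Its co-kernel is $\{v\in\mathbb R^{2Ln}:v^\top\mathcal A=0\}$; write $v^\ell_{j^\pm}=v_{(j,\ell,\pm)}$. Graphs: $G^\ell$ is the bipartite graph on $V^\pm=\{1^\pm,\dots,n^\pm\}$ with an edge $\{i^-,j^+\}$ whenever $M^\ell_{ij}>0$; $\mathcal C^\ell$ its connected components; $r=\sum_\ell|\mathcal C^\ell|$. Indicator $\xi^\ell_C\in\mathbb R^{2Ln}$: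 $(\xi^\ell_C)^{\ell'}_x=1$ iff $\ell'=\ell$ and $x\in C$. Companion-connected: for each $j$ there is $i\ne j$ such that for every $\ell$, $j^-$ and $i^-$ lie in the same component of $G^\ell$ as $j^+$. Enumerate all components as $q=1,\dots,r$; $\Xi_j\in\{0,1\}^{r\times L}$ has $\Xi_j(q,\ell)=1$ iff the $q$-th component belongs to $\mathcal C^\ell$ and contains $j^+$ (equivalently $j^-$). Estimated factors: for each $j$, $O_j$ has rank $L$; let $O_j=\overline{U_j}\Sigma_jV_j$ be a compact singular value decomposition with $U_j,V_j\in\mathbb R^{L\times n}$ having orthonormal rows and $\Sigma_j\in\mathbb R^{L\times L}$ diagonal positive; set $P'_j=U_j$, $Q'_j=\Sigma_jV_j$, and $\mathcal A'=\mathcal A(P'_1,\dots,P'_n,Q'_1,\dots,Q'_n)$. Let the rows of a matrix $B\in\mathbb R^{r\times 2Ln}$ be a basis of the co-kernel of $\mathcal A'$ (which has dimension $r$ under the hypotheses), and write $B=(Y'_1,\dots,Y'_n,Z'_1,\dots,Z'_n)$ where $Y'_j\in\mathbb R^{r\times L}$ consists of the columns of $B$ indexed by $(j,\ell,+)$, $\ell\in[L]$, and $Z'_j\in\mathbb R^{r\times L}$ of those indexed by $(j,\ell,-)$, $\ell\in[L]$. *)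

(* Defs.v *)
From HB Require Import structures.
From mathcomp Require Import all_boot all_order all_algebra.
From mathcomp Require Import reals.
From Stdlib Require Import ClassicalEpsilon.
Set Implicit Arguments. Unset Strict Implicit. Unset Printing Implicit Defensive.
Import Order.TTheory GRing.Theory Num.Theory.
Local Open Scope ring_scope.

Section Defs.
Variable R : realType.
Variables L n : nat.

Definition mixture (M : 'I_L -> 'M[R]_n) (s : 'I_L -> 'I_n -> R) : Prop :=
  (forall l i j, 0 <= M l i j) /\
  (forall l i, \sum_(j < n) M l i j = 1) /\
  (forall l i, 0 <= s l i) /\
  \sum_(l < L) \sum_(i < n) s l i = 1.

(* O_j(i,k) = p(i,j,k) *)
Definition Omat (M : 'I_L -> 'M[R]_n) (s : 'I_L -> 'I_n -> R) (j : 'I_n)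
  : 'M[R]_n := \matrix_(i, k) \sum_(l < L) s l i * M l i j * M l j k.

Definition Pmat (M : 'I_L -> 'M[R]_n) (s : 'I_L -> 'I_n -> R) (j : 'I_n)
  : 'M[R]_(L, n) := \matrix_(l, i) (s l i * M l i j).
Definition Qmat (M : 'I_L -> 'M[R]_n) (s : 'I_L -> 'I_n -> R) (j : 'I_n)
  : 'M[R]_(L, n) := \matrix_(l, k) (s l j * M l j k).
Definition Mplus (M : 'I_L -> 'M[R]_n) (j : 'I_n) : 'M[R]_(L, n) :=
  \matrix_(l, k) M l j k.

(* Row indices (j, l, b) of the shuffle matrix: b = true is '+', false is '-'.
   Column indices (i, j). *)
Definition rowidx := ('I_n * 'I_L * bool)%type.
Definition colidx := ('I_n * 'I_n)%type.

Definition shuffle (P Q : 'I_n -> 'M[R]_(L, n)) (x : rowidx) (c : colidx) : R :=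
  let: (k, l, b) := x in
  let: (i, j) := c in
  if b then (if j == k then P k l i else 0)
  else (if i == k then - Q k l j else 0).

Definition in_coker (A : rowidx -> colidx -> R) (v : rowidx -> R) : Prop :=
  forall c : colidx, \sum_(x : rowidx) v x * A x c = 0.

(* Vertices of G^l: (i, false) = i^-, (i, true) = i^+. *)
Definition vertex := ('I_n * bool)%type.

Definition medge (Ml : 'M[R]_n) : rel vertex :=
  fun x y =>
    match x, y with
    | (i, false), (j, true) => 0 < Ml i j
    | (j, true), (i, false) => 0 < Ml i j
    | _, _ => false
    end.

Definition comps (Ml : 'M[R]_n) : {set {set vertex}} :=
  [set [set y | connect (medge Ml) x y] | x : vertex].

Definition ncomp (M : 'I_L -> 'M[R]_n) : nat := \sum_(l < L) #|comps (M l)|.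

Definition xi (l : 'I_L) (C : {set vertex}) (x : rowidx) : R :=
  let: (k, l', b) := x in if (l' == l) && ((k, b) \in C) then 1 else 0.

Definition coker_spanned_by_indicators (M : 'I_L -> 'M[R]_n)
  (A : rowidx -> colidx -> R) : Prop :=
  (forall l C, C \in comps (M l) -> in_coker A (xi l C)) /\
  (forall v, in_coker A v ->
     exists a : 'I_L -> {set vertex} -> R,
       forall x, v x = \sum_(l < L) \sum_(C in comps (M l)) a l C * xi l C x).

Definition companion_connected (M : 'I_L -> 'M[R]_n) : Prop :=
  forall j : 'I_n, exists2 i : 'I_n, i != j &
    forall l : 'I_L,
      connect (medge (M l)) (j, true) (j, false) /\
      connect (medge (M l)) (j, true) (i, false).

(* Xi_j(q,l') for the component q = (l, C), C in C^l:
   1 iff l' = l and C contains j^+. *)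
Definition Xi (j : 'I_n) (l : 'I_L) (C : {set vertex}) (l' : 'I_L) : bool :=
  (l' == l) && ((j, true) \in C).

Definition Xi_eq (M : 'I_L -> 'M[R]_n) (i j : 'I_n) : Prop :=
  forall (l : 'I_L) (C : {set vertex}), C \in comps (M l) ->
    forall l' : 'I_L, Xi i l C l' = Xi j l C l'.

Definition compact_svd (O : 'M[R]_n) (U : 'M[R]_(L, n)) (S : 'M[R]_L)
  (V : 'M[R]_(L, n)) : Prop :=
  U *m U^T = 1%:M /\ V *m V^T = 1%:M /\
  (forall a b : 'I_L, a != b -> S a b = 0) /\
  (forall a : 'I_L, 0 < S a a) /\
  O = U^T *m S *m V.

Definition coker_basis (r : nat) (A : rowidx -> colidx -> R)
  (B : 'I_r -> rowidx -> R) : Prop :=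
  (forall q, in_coker A (B q)) /\
  (forall a : 'I_r -> R, (forall x, \sum_(q < r) a q * B q x = 0) ->
     forall q, a q = 0) /\
  (forall v, in_coker A v ->
     exists a : 'I_r -> R, forall x, v x = \sum_(q < r) a q * B q x).

Definition Yprime (r : nat) (B : 'I_r -> rowidx -> R) (j : 'I_n) : 'M[R]_(r, L) :=
  \matrix_(q, l) B q (j, l, true).
Definition Zprime (r : nat) (B : 'I_r -> rowidx -> R) (j : 'I_n) : 'M[R]_(r, L) :=
  \matrix_(q, l) B q (j, l, false).

End Defs.

Definition penrose (R : realType) (m p : nat) (A : 'M[R]_(m, p))
  (X : 'M[R]_(p, m)) : Prop :=
  A *m X *m A = A /\ X *m A *m X = X /\
  (A *m X)^T = A *m X /\ (X *m A)^T = X *m A.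

Definition pinv (R : realType) (m p : nat) (A : 'M[R]_(m, p)) : 'M[R]_(p, m) :=
  epsilon (inhabits 0) (fun X => penrose A X).

(* Main.v *)
Require Import Defs.
From HB Require Import structures.
From mathcomp Require Import all_boot all_order all_algebra.
From mathcomp Require Import reals.
From Stdlib Require Import ClassicalEpsilon.
Import Order.TTheory GRing.Theory Num.Theory.
Local Open Scope ring_scope.


Unset Implicit Arguments. Set Strict Implicit.


Section LA.
Variable R : realType.
Set Implicit Arguments. Unset Strict Implicit.

Lemma inj_row_free m p (A : 'M[R]_(m, p)) :
  (forall u : 'rV_m, u *m A = 0 -> u = 0) -> row_free A.
Proof.
move=> H; rewrite -kermx_eq0; apply/eqP/row_matrixP => i.
by rewrite row0; apply: H; rewrite -row_mul mulmx_ker row0.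
Qed.

Lemma sq_rv0 m (v : 'rV[R]_m) : (v *m v^T) 0 0 = 0 -> v = 0.
Proof.
rewrite mxE => H; apply/rowP => k; rewrite mxE.
have h0 : forall k', predT k' -> 0 <= v 0 k' * v^T k' 0.
  by move=> k' _; rewrite mxE -expr2 sqr_ge0.
have := psumr_eq0P h0 H (isT : predT k).
rewrite mxE => h; apply/eqP; rewrite -[_ == _]orbb -mulf_eq0 h //.
Qed.

Lemma gram_unit k m (F : 'M[R]_(k, m)) : row_free F -> F *m F^T \in unitmx.
Proof.
move=> fF; rewrite -row_free_unit; apply: inj_row_free => u Hu.
apply: (row_free_inj fF); rewrite mul0mx; apply: sq_rv0.
by rewrite trmx_mul mulmxA -(mulmxA u) Hu mul0mx mxE.
Qed.

Lemma trTZ0 m p (Z : 'M[R]_(m, p)) : Z^T *m Z = 0 -> Z = 0.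
Proof.
move=> H; apply/matrixP => q k.
have : row k Z^T = 0.
  apply: sq_rv0; transitivity ((Z^T *m Z) k k); last by rewrite H mxE.
  by rewrite !mxE; apply: eq_bigr => x _; rewrite !mxE.
by move/rowP/(_ q); rewrite !mxE.
Qed.

Lemma invmx_eq n (A B : 'M[R]_n) : A *m B = 1%:M -> invmx A = B.
Proof.
move=> H; have [uA _] := mulmx1_unit H.
by rewrite -[invmx A]mulmx1 -H mulmxA mulVmx // mul1mx.
Qed.

Lemma penrose_unique m p (A : 'M[R]_(m, p)) X Y :
  penrose A X -> penrose A Y -> X = Y.
Proof.
move=> [h1 [h2 [h3 h4]]] [k1 [k2 [k3 k4]]].
have eX : X = X *m A *m Y.
  transitivity (X *m (A *m X)^T); first by rewrite h3 mulmxA h2.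
  rewrite trmx_mul -{1}k1 !trmx_mul !mulmxA.
  rewrite -(mulmxA X X^T) -trmx_mul h3 -(mulmxA _ Y^T) -trmx_mul k3.
  by rewrite !mulmxA h2.
have eY : Y = X *m A *m Y.
  transitivity ((Y *m A)^T *m Y); first by rewrite k4 k2.
  rewrite trmx_mul -{1}h1 !trmx_mul -!mulmxA.
  rewrite (mulmxA A^T X^T) -trmx_mul h4 (mulmxA A^T) -trmx_mul k4.
  by rewrite (mulmxA (X *m A)) -(mulmxA _ (Y *m A)) k2 mulmxA.
by rewrite {1}eX -eY.
Qed.

Lemma row_free_tr_full m p (F : 'M[R]_(m, p)) : row_full F -> row_free F^T.
Proof. by rewrite /row_free /row_full mxrank_tr. Qed.

Lemma penrose_fact m k p (F : 'M[R]_(m, k)) (G : 'M[R]_(k, p)) :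
  row_free F^T -> row_free G ->
  penrose (F *m G) (G^T *m invmx (G *m G^T) *m invmx (F^T *m F) *m F^T).
Proof.
move=> fFt fG.
have uG := gram_unit fG.
have uF : F^T *m F \in unitmx by have := gram_unit fFt; rewrite trmxK.
have eAX : F *m G *m (G^T *m invmx (G *m G^T) *m invmx (F^T *m F) *m F^T)
   = F *m invmx (F^T *m F) *m F^T.
  by rewrite !mulmxA -(mulmxA F G) -(mulmxA F) mulmxV // mulmx1.
have eXA : (G^T *m invmx (G *m G^T) *m invmx (F^T *m F) *m F^T) *m (F *m G)
   = G^T *m invmx (G *m G^T) *m G.
  by rewrite !mulmxA -(mulmxA _ F^T F) mulmxKV.
split; [|split; [|split]].
- by rewrite eAX !mulmxA -(mulmxA _ F^T F) mulmxKV.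
- by rewrite eXA !mulmxA -(mulmxA _ G G^T) mulmxK.
- by rewrite eAX !trmx_mul trmxK trmx_inv trmx_mul trmxK mulmxA.
- by rewrite eXA !trmx_mul trmxK trmx_inv trmx_mul trmxK mulmxA.
Qed.

Lemma penrose_exists m p (A : 'M[R]_(m, p)) : exists X, penrose A X.
Proof.
have fG : row_free (row_base A) by apply: row_base_free.
have fFt : row_free (col_base A)^T by apply/row_free_tr_full/col_base_full.
by have := penrose_fact fFt fG; rewrite mulmx_base => h; eexists; exact: h.
Qed.

Lemma pinv_spec m p (A : 'M[R]_(m, p)) : penrose A (pinv A).
Proof. by rewrite /pinv; apply: epsilon_spec; apply: penrose_exists. Qed.

Lemma pinv_eq m p (A : 'M[R]_(m, p)) X : penrose A X -> pinv A = X.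
Proof. by move=> h; apply: (penrose_unique (pinv_spec A) h). Qed.

End LA.


Unset Implicit Arguments. Set Strict Implicit.


Section LB.
Variable R : realType.
Set Implicit Arguments. Unset Strict Implicit.
Variables r L : nat.

Fact Wp_key : unit. Proof. exact: tt. Qed.
Definition Wp (W : 'M[R]_(r, L)) : 'M[R]_(L, r) :=
  locked_with Wp_key (invmx (W^T *m W) *m W^T).
Lemma WpE W : Wp W = invmx (W^T *m W) *m W^T.
Proof. by rewrite /Wp unlock. Qed.

Lemma WtW_unit (W : 'M[R]_(r, L)) : row_free W^T -> W^T *m W \in unitmx.
Proof. by move=> f; have := gram_unit f; rewrite trmxK. Qed.

Lemma WpW (W : 'M[R]_(r, L)) : row_free W^T -> Wp W *m W = 1%:M.
Proof. by move=> f; rewrite WpE -mulmxA mulVmx // WtW_unit. Qed.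

Lemma WTWpT (W : 'M[R]_(r, L)) : row_free W^T -> W^T *m (Wp W)^T = 1%:M.
Proof. by move=> f; rewrite -trmx_mul WpW // trmx1. Qed.

Lemma WpT (W : 'M[R]_(r, L)) : (Wp W)^T = W *m invmx (W^T *m W).
Proof. by rewrite WpE trmx_mul trmxK trmx_inv trmx_mul trmxK. Qed.

Lemma WpTWT (W : 'M[R]_(r, L)) : (Wp W)^T *m W^T = W *m Wp W.
Proof. by rewrite WpT WpE mulmxA. Qed.

Lemma pinvK (W : 'M[R]_(r, L)) D : row_free W^T -> D \in unitmx ->
  pinv (W *m D *m W^T) = (Wp W)^T *m invmx D *m Wp W.
Proof.
move=> f uD; apply: pinv_eq.
have e1 : W *m D *m W^T *m ((Wp W)^T *m invmx D *m Wp W) = W *m Wp W.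
  by rewrite !mulmxA -(mulmxA _ W^T) WTWpT // mulmx1 mulmxK.
have e2 : (Wp W)^T *m invmx D *m Wp W *m (W *m D *m W^T) = W *m Wp W.
  by rewrite !mulmxA -(mulmxA _ (Wp W) W) WpW // mulmx1 mulmxKV // WpT WpE mulmxA.
split; [|split; [|split]].
- by rewrite e1 !mulmxA -(mulmxA W) WpW // mulmx1.
- by rewrite e2 -WpTWT !mulmxA -(mulmxA _ W^T) WTWpT // mulmx1.
- by rewrite e1 trmx_mul WpT WpE mulmxA.
- by rewrite e2 trmx_mul WpT WpE mulmxA.
Qed.

Lemma penrose_E (W : 'M[R]_(r, L)) E : row_free W^T -> E \in unitmx ->
  penrose ((Wp W)^T *m E *m W^T) ((Wp W)^T *m invmx E *m W^T).
Proof.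
move=> f uE.
have e1 : (Wp W)^T *m E *m W^T *m ((Wp W)^T *m invmx E *m W^T) = W *m Wp W.
  by rewrite !mulmxA -(mulmxA _ W^T) WTWpT // mulmx1 mulmxK // WpT WpE mulmxA.
have e2 : (Wp W)^T *m invmx E *m W^T *m ((Wp W)^T *m E *m W^T) = W *m Wp W.
  by rewrite !mulmxA -(mulmxA _ W^T) WTWpT // mulmx1 mulmxKV // WpT WpE mulmxA.
split; [|split; [|split]].
- by rewrite e1 -WpTWT !mulmxA -(mulmxA _ W^T) WTWpT // mulmx1.
- by rewrite e2 -WpTWT !mulmxA -(mulmxA _ W^T) WTWpT // mulmx1.
- by rewrite e1 trmx_mul WpT WpE mulmxA.
- by rewrite e2 trmx_mul WpT WpE mulmxA.
Qed.

Lemma row_free_Wp (W : 'M[R]_(r, L)) : row_free W^T -> row_free (Wp W).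
Proof.
move=> f; apply: inj_row_free => u hu.
by rewrite -[u]mulmx1 -(WpW f) mulmxA hu mul0mx.
Qed.

Lemma LA_fwd (W : 'M[R]_(r, L)) Di Dj : row_free W^T ->
  Di \in unitmx -> Dj \in unitmx ->
  \rank (pinv (W *m Dj *m W^T) *m (W *m Di *m W^T)) = L /\
  pinv (pinv (W *m Di *m W^T) *m (W *m Dj *m W^T))
    = pinv (W *m Dj *m W^T) *m (W *m Di *m W^T).
Proof.
move=> f ui uj.
have eK : forall D1 D2, D1 \in unitmx ->
    pinv (W *m D1 *m W^T) *m (W *m D2 *m W^T) = (Wp W)^T *m (invmx D1 *m D2) *m W^T.
  {move=> D1 D2 u1; rewrite pinvK // !mulmxA -(mulmxA _ (Wp W)) WpW // mulmx1.
  by []. }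
rewrite !eK //; split.
  rewrite mxrankMfree // -mxrank_tr trmx_mul trmxK mxrankMfree ?row_free_Wp //.
  by rewrite mxrank_tr mxrank_unit // unitmx_mul unitmx_inv ui uj.
apply: pinv_eq.
have -> : invmx Dj *m Di = invmx (invmx Di *m Dj).
  apply/esym/invmx_eq; rewrite !mulmxA -(mulmxA _ Dj) mulmxV // mulmx1 mulVmx //.
apply: penrose_E => //; by rewrite unitmx_mul unitmx_inv ui uj.
Qed.

Lemma LA_bwd (Wi Wj : 'M[R]_(r, L)) Di Dj : row_free Wi^T -> row_free Wj^T ->
  Di \in unitmx -> Dj \in unitmx ->
  \rank (pinv (Wj *m Dj *m Wj^T) *m (Wi *m Di *m Wi^T)) = L ->
  pinv (pinv (Wi *m Di *m Wi^T) *m (Wj *m Dj *m Wj^T))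
    = pinv (Wj *m Dj *m Wj^T) *m (Wi *m Di *m Wi^T) ->
  Wj = Wi *m (Wp Wi *m Wj).
Proof.
move=> fi fj ui uj hrk hp.
set Y := pinv (Wi *m Di *m Wi^T) *m (Wj *m Dj *m Wj^T).
set X := pinv (Wj *m Dj *m Wj^T) *m (Wi *m Di *m Wi^T).
have [_ [h2 _]] : penrose Y X by have := pinv_spec Y; rewrite /Y hp.
set Mx := Wp Wj *m Wi *m Di *m Wi^T.
have eX : X = (Wp Wj)^T *m invmx Dj *m Mx by rewrite /X pinvK // /Mx !mulmxA.
have eY : Y = (Wp Wi)^T *m invmx Di *m (Wp Wi *m Wj *m Dj *m Wj^T).
  by rewrite /Y pinvK // !mulmxA.
set N := Wp Wj *m (Wi *m Wp Wi) *m Wj.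
have eXYX : X *m Y *m X = (Wp Wj)^T *m invmx Dj *m N *m Mx.
  rewrite eX eY /Mx /N !mulmxA -(mulmxA _ Wi^T) WTWpT // mulmx1 mulmxK //.
  by rewrite -(mulmxA _ Wj^T) WTWpT // mulmx1 mulmxK // !mulmxA.
have fM : row_free Mx.
  rewrite /row_free eqn_leq rank_leq_row -{1}hrk -/X eX mxrankM_maxr //.
have eN : N = 1%:M.
  apply: (row_free_inj fM); rewrite mul1mx /=.
  have := h2; rewrite eXYX eX => h.
  have := congr1 (mulmx (Dj *m Wj^T)) h.
  rewrite !mulmxA -(mulmxA _ Wj^T) WTWpT // mulmx1 mulmxV // !mul1mx. move=> e.
  by rewrite /N /Mx !mulmxA e.
set Pi := Wi *m Wp Wi.
have PiT : Pi^T = Pi by rewrite /Pi trmx_mul WpT WpE mulmxA.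
have PiP : Pi *m Pi = Pi by rewrite /Pi mulmxA -(mulmxA Wi) WpW // mulmx1.
have e3 : Wj^T *m Pi *m Wj = Wj^T *m Wj.
  have := congr1 (mulmx (Wj^T *m Wj)) eN; rewrite mulmx1 /N WpE.
  by rewrite !mulmxA mulmxV ?WtW_unit // mul1mx -/Pi.
have : (Wj - Pi *m Wj)^T *m (Wj - Pi *m Wj) = 0.
  have -> : (Wj - Pi *m Wj)^T = Wj^T - (Pi *m Wj)^T by apply/matrixP => a b; rewrite !mxE.
  rewrite trmx_mul PiT mulmxBl !mulmxBr !mulmxA -(mulmxA _ (Wp Wi) Wi) WpW // mulmx1.
  have e3p : Wj^T *m Wi *m Wp Wi *m Wj = Wj^T *m Wj by rewrite -e3 /Pi !mulmxA.
  rewrite e3p.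
  by rewrite !subrr.
move/trTZ0/eqP; rewrite subr_eq0 => /eqP {1}->.
by rewrite /Pi mulmxA.
Qed.

End LB.


Unset Implicit Arguments. Set Strict Implicit.


Section LC.
Variable R : realType.
Set Implicit Arguments. Unset Strict Implicit.
Variables L n : nat.

Definition rowv (v : rowidx L n -> R) (k : 'I_n) (bb : bool) : 'rV[R]_L :=
  \row_l v (k, l, bb).

Lemma sum_rowidx (F : rowidx L n -> R) :
  \sum_(x : rowidx L n) F x =
  \sum_(k < n) \sum_(l < L) (F (k, l, true) + F (k, l, false)).
Proof.
transitivity (\sum_(p : ('I_n * 'I_L) * bool) F (p.1, p.2)).
  by apply: eq_bigr => -[].
rewrite -(pair_bigA _ (fun kl bb => F (kl, bb))) /=.
transitivity (\sum_(p : 'I_n * 'I_L) \sum_bb F (p.1, p.2, bb)).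
  by apply: eq_bigr => -[].
rewrite -(pair_bigA _ (fun k l => \sum_bb F (k, l, bb))) /=.
apply: eq_bigr => k _; apply: eq_bigr => l _; rewrite big_bool. by [].
Qed.

Lemma sum_if (b : 'I_n) (G H : 'I_n -> 'I_L -> R) :
  \sum_(k < n) \sum_(l < L) H k l * (if b == k then G k l else 0) =
  \sum_(l < L) H b l * G b l.
Proof.
rewrite (bigD1 b) //= eqxx [X in _ + X]big1 ?addr0 //.
move=> k /negPf hk; apply: big1 => l _; rewrite eq_sym hk mulr0 //.
Qed.


Lemma in_coker_shuffle (P Q : 'I_n -> 'M[R]_(L, n)) v :
  in_coker (shuffle P Q) v <->
  forall a b : 'I_n, (rowv v b true *m P b) 0 a = (rowv v a false *m Q a) 0 b.
Proof.
have E : forall a b, \sum_(x : rowidx L n) v x * shuffle P Q x (a, b) =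
   (rowv v b true *m P b) 0 a - (rowv v a false *m Q a) 0 b.
  move=> a b; rewrite sum_rowidx /=.
  under eq_bigr => k _ do rewrite big_split /=.
  rewrite big_split /= sum_if.
  rewrite (sum_if a (fun k l => - Q k l b)).
  rewrite !mxE -sumrN.
  by congr (_ + _); apply: eq_bigr => l _; rewrite !mxE ?mulrN.
split.
  by move=> h a b; apply/eqP; rewrite -subr_eq0 -E; apply/eqP; apply: (h (a, b)).
by move=> h [a b]; rewrite E h subrr.
Qed.

End LC.


Unset Implicit Arguments. Set Strict Implicit.


Lemma sum_delta (R : realType) (T : finType) (S : {set T}) (c : T) (F : T -> R) :
  c \in S -> \sum_(C in S) (C == c)%:R * F C = F c.
Proof.
move=> cS; rewrite (bigD1 c) //= eqxx mul1r [X in _ + X]big1 ?addr0 //.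
by move=> C /andP [_ /negPf ->]; rewrite mul0r.
Qed.

Lemma diag_unit (R : realType) m (d : 'rV[R]_m) :
  (forall l, d 0 l != 0) -> diag_mx d \in unitmx.
Proof.
move=> h; have : diag_mx d *m diag_mx (\row_l (d 0 l)^-1) = 1%:M.
  apply/matrixP => a b; rewrite mul_diag_mx !mxE.
  case: (eqVneq a b) => [->|nab]; first by rewrite mulr1n divff.
  by rewrite mulr0n mulr0.
by case/mulmx1_unit.
Qed.

Section Comp.
Variables (R : realType) (L n : nat) (M : 'I_L -> 'M[R]_n).
Hypothesis hcc : companion_connected M.

Lemma medge_sym l : symmetric (medge (M l)).
Proof. by move=> [i []] [j []]. Qed.

Definition cl (l : 'I_L) (k : 'I_n) : {set vertex n} :=
  [set y | connect (medge (M l)) (k, true) y].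

Lemma cl_in l k : cl l k \in comps (M l).
Proof. exact: imset_f. Qed.

Lemma cl_eq {l x y} : connect (medge (M l)) x y ->
  [set z | connect (medge (M l)) x z] = [set z | connect (medge (M l)) y z].
Proof.
move=> hxy; apply/setP => z; rewrite !inE.
by rewrite (same_connect (sym_connect_sym (@medge_sym l)) hxy).
Qed.

Lemma comp_form {l C} : C \in comps (M l) ->
  exists x, C = [set z | connect (medge (M l)) x z].
Proof. by case/imsetP => x _ ->; exists x. Qed.

Lemma in_comp_eq l C k bb : C \in comps (M l) -> ((k, bb) \in C) = (C == cl l k).
Proof.
move=> /comp_form [x ->]; have [_ _ /(_ l) [hk _]] := hcc k.
have csym := sym_connect_sym (@medge_sym l).
have E : connect (medge (M l)) x (k, bb) = connect (medge (M l)) x (k, true).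
  case: bb => //; apply/idP/idP => h; apply: connect_trans h _; first by rewrite csym.
  by [].
rewrite inE E; apply/idP/eqP => [h|h]; first by rewrite /cl (cl_eq h).
have : (k, true) \in cl l k by rewrite inE connect0.
by rewrite -h inE.
Qed.

Lemma comps_cl l C : C \in comps (M l) -> exists k, C = cl l k.
Proof.
move=> hC; have [x hx] := comp_form hC; case: x hx => k bb hx; exists k.
by apply/eqP; rewrite -(in_comp_eq _ _ _ bb hC) hx inE connect0.
Qed.

Lemma delta_sum (f : 'I_L -> {set vertex n} -> R) l0 C0 : C0 \in comps (M l0) ->
  \sum_(l < L) \sum_(C in comps (M l)) ((l == l0) && (C == C0))%:R * f l C = f l0 C0.
Proof.
move=> h0; rewrite (bigD1 l0) //= [X in _ + X]big1 ?addr0.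
  by under eq_bigr => C _ do rewrite eqxx /=; rewrite sum_delta.
by move=> l /negPf hl; apply: big1 => C _; rewrite hl mul0r.
Qed.

Lemma xi_sum (f : 'I_L -> {set vertex n} -> R) k l0 bb :
  \sum_(l < L) \sum_(C in comps (M l)) f l C * xi R l C (k, l0, bb) = f l0 (cl l0 k).
Proof.
rewrite -(delta_sum f _ _ (cl_in l0 k)); apply: eq_bigr => l _.
apply: eq_bigr => C hC; rewrite /xi mulrC; congr (_ * _).
move: hC; case: (eqVneq l l0) => [->|h] hC.
  rewrite /= (in_comp_eq _ _ _ bb hC). by case: (C == _).
by [].
Qed.

End Comp.

Arguments cl {R L n} M l k.
Arguments cl_in {R L n} M l k.
Arguments in_comp_eq {R L n M} hcc {l C} k bb.
Arguments comps_cl {R L n M} hcc {l C}.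
Arguments delta_sum {R L n} M f {l0 C0}.
Arguments xi_sum {R L n M} hcc f k l0 bb.


Unset Implicit Arguments. Set Strict Implicit.


Section Main.
Variables (R : realType) (L n : nat) (M : 'I_L -> 'M[R]_n) (s : 'I_L -> 'I_n -> R)
  (U V : 'I_n -> 'M[R]_(L, n)) (Sg : 'I_n -> 'M[R]_L)
  (B : 'I_(ncomp M) -> rowidx L n -> R).
Hypothesis hs : forall (l : 'I_L) (k : 'I_n), 0 < s l k.
Hypothesis hP : forall k : 'I_n, \rank (Pmat M s k) = L.
Hypothesis hcc : companion_connected M.
Hypothesis hcok : coker_spanned_by_indicators M (shuffle (Pmat M s) (Qmat M s)).
Hypothesis hsvd : forall k : 'I_n, compact_svd (Omat M s k) (U k) (Sg k) (V k).
Hypothesis hB : coker_basis (shuffle U (fun k => Sg k *m V k)) B.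

Definition D k : 'M[R]_L := diag_mx (\row_l s l k).
Fact G_key : unit. Proof. exact: tt. Qed.
Definition G k : 'M[R]_L :=
  locked_with G_key ((invmx (Sg k))^T *m V k *m (Mplus M k)^T).
Lemma GE k : G k = (invmx (Sg k))^T *m V k *m (Mplus M k)^T.
Proof. by rewrite /G unlock. Qed.
Definition H k : 'M[R]_L := invmx (G k)^T.

Lemma uD k : D k \in unitmx.
Proof. by apply: diag_unit => l; rewrite mxE gt_eqF. Qed.

Lemma QE k : Qmat M s k = D k *m Mplus M k.
Proof. by apply/matrixP => a b; rewrite mul_diag_mx !mxE. Qed.

Lemma OE k : Omat M s k = (Pmat M s k)^T *m Mplus M k.
Proof.
apply/matrixP => a b; rewrite !mxE; apply: eq_bigr => l _.
by rewrite !mxE.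
Qed.

Lemma uS k : Sg k \in unitmx.
Proof.
have [_ [_ [hd [hp _]]]] := hsvd k.
have -> : Sg k = diag_mx (\row_a Sg k a a).
  apply/matrixP => a b; rewrite !mxE.
  case: (eqVneq a b) => [->|nab]; first by rewrite mulr1n.
  by rewrite mulr0n hd.
by apply: diag_unit => a; rewrite mxE gt_eqF.
Qed.

Lemma UE k : U k = G k *m Pmat M s k.
Proof.
have [hU [hV [_ [_ hO]]]] := hsvd k.
have e : (U k)^T = Omat M s k *m (V k)^T *m invmx (Sg k).
  by rewrite hO -(mulmxA _ (V k)) hV mulmx1 mulmxK // uS.
by rewrite -[U k]trmxK e OE !trmx_mul !trmxK GE !mulmxA.
Qed.

Lemma uG k : G k \in unitmx.
Proof.
have [hU _] := hsvd k.
have : G k *m (Pmat M s k *m (U k)^T) = 1%:M by rewrite mulmxA -UE.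
by case/mulmx1_unit.
Qed.

Lemma SVE k : Sg k *m V k = H k *m Mplus M k.
Proof.
have [hU [hV [_ [_ hO]]]] := hsvd k.
have fP : row_free (Pmat M s k) by rewrite /row_free hP.
have e : (G k)^T *m (Sg k *m V k) = Mplus M k.
  have e0 : (Pmat M s k)^T *m ((G k)^T *m (Sg k *m V k)) = (Pmat M s k)^T *m Mplus M k.
    by rewrite mulmxA -trmx_mul -UE !mulmxA -hO OE.
  apply: trmx_inj; apply: (row_free_inj fP).
  by rewrite -[Pmat M s k]trmxK -!trmx_mul e0.
by rewrite /H -e mulKmx // unitmx_tr uG.
Qed.

Lemma SVE' k : H k *m invmx (D k) *m Qmat M s k = Sg k *m V k.
Proof. by rewrite QE SVE mulmxA mulmxKV // uD. Qed.

Definition phi (v : rowidx L n -> R) (x : rowidx L n) : R :=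
  let: (k, l, bb) := x in
  if bb then (rowv v k true *m G k) 0 l
  else (rowv v k false *m (H k *m invmx (D k))) 0 l.

Definition psi (w : rowidx L n -> R) (x : rowidx L n) : R :=
  let: (k, l, bb) := x in
  if bb then (rowv w k true *m invmx (G k)) 0 l
  else (rowv w k false *m (D k *m invmx (H k))) 0 l.

Lemma rowv_phi v k :
  rowv (phi v) k true = rowv v k true *m G k /\
  rowv (phi v) k false = rowv v k false *m (H k *m invmx (D k)).
Proof. by split; apply/rowP => l; rewrite [LHS]mxE. Qed.

Lemma rowv_psi w k :
  rowv (psi w) k true = rowv w k true *m invmx (G k) /\
  rowv (psi w) k false = rowv w k false *m (D k *m invmx (H k)).
Proof. by split; apply/rowP => l; rewrite [LHS]mxE. Qed.

Lemma phi_coker v : in_coker (shuffle U (fun k => Sg k *m V k)) v ->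
  in_coker (shuffle (Pmat M s) (Qmat M s)) (phi v).
Proof.
move/(in_coker_shuffle _ _ _) => h; apply/(in_coker_shuffle _ _ _) => a b.
have [e1 _] := rowv_phi v b; have [_ e2] := rowv_phi v a.
by rewrite e1 e2 -mulmxA -UE -(mulmxA _ _ (Qmat M s a)) SVE' h.
Qed.

Lemma psi_coker w : in_coker (shuffle (Pmat M s) (Qmat M s)) w ->
  in_coker (shuffle U (fun k => Sg k *m V k)) (psi w).
Proof.
move/(in_coker_shuffle _ _ _) => h; apply/(in_coker_shuffle _ _ _) => a b.
have [e1 _] := rowv_psi w b; have [_ e2] := rowv_psi w a.
have uH : H a \in unitmx by rewrite unitmx_inv unitmx_tr uG.
rewrite e1 e2 UE mulmxA mulmxKV ?uG // h -SVE' !mulmxA.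
by rewrite mulmxKV // mulmxK // uD.
Qed.

Lemma exists_a : exists a : 'I_(ncomp M) -> 'I_L -> {set vertex n} -> R,
  forall q x, phi (B q) x = \sum_(l < L) \sum_(C in comps (M l)) a q l C * xi R l C x.
Proof.
have [_ hc2] := hcok; have [hB1 _] := hB.
have h q := hc2 (phi (B q)) (phi_coker _ (hB1 q)).
exists (fun q => epsilon (inhabits (fun _ _ => 0))
  (fun aq => forall x, phi (B q) x =
     \sum_(l < L) \sum_(C in comps (M l)) aq l C * xi R l C x)).
by move=> q; apply: (epsilon_spec _ _ (h q)).
Qed.


Section WithA.
Variable a : 'I_(ncomp M) -> 'I_L -> {set vertex n} -> R.
Hypothesis ha : forall q x,
  phi (B q) x = \sum_(l < L) \sum_(C in comps (M l)) a q l C * xi R l C x.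

Definition W k : 'M[R]_(ncomp M, L) := \matrix_(q, l) a q l (cl M l k).

Lemma Yp_eq k : Yprime B k *m G k = W k.
Proof.
apply/matrixP => q l; rewrite [RHS]mxE.
transitivity (phi (B q) (k, l, true)); last by rewrite ha xi_sum.
by rewrite /= !mxE; apply: eq_bigr => m _; rewrite !mxE.
Qed.

Lemma Zp_eq k : Zprime B k *m (H k *m invmx (D k)) = W k.
Proof.
apply/matrixP => q l; rewrite [RHS]mxE.
transitivity (phi (B q) (k, l, false)); last by rewrite ha xi_sum.
by rewrite /= !mxE; apply: eq_bigr => m _; rewrite !mxE.
Qed.

Lemma KE k : Zprime B k *m (Yprime B k)^T = W k *m D k *m (W k)^T.
Proof.
have eY : Yprime B k = W k *m invmx (G k) by rewrite -Yp_eq mulmxK // uG.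
have eHD : H k *m invmx (D k) *m (D k *m (G k)^T) = 1%:M.
  by rewrite mulmxA mulmxKV ?uD // /H mulVmx // unitmx_tr uG.
have eZ : Zprime B k = W k *m D k *m (G k)^T.
  by rewrite -[Zprime B k]mulmx1 -eHD mulmxA Zp_eq mulmxA.
rewrite eY eZ trmx_mul -!mulmxA; congr (_ *m (_ *m _)).
by rewrite mulmxA -trmx_mul mulVmx ?uG // trmx1 mul1mx.
Qed.

Lemma a_inj (X : 'I_L -> {set vertex n} -> R) :
  (forall q, \sum_(l < L) \sum_(C in comps (M l)) a q l C * X l C = 0) ->
  forall l C, C \in comps (M l) -> X l C = 0.
Proof.
move=> hX l0 C0 h0.
have [hc1 _] := hcok; have [_ [_ hB3]] := hB.
have [beta hbeta] := hB3 _ (psi_coker _ (hc1 l0 C0 h0)).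
have key : forall k l, xi R l0 C0 (k, l, true) = \sum_q beta q * a q l (cl M l k).
  move=> k l.
  have e1 : xi R l0 C0 (k, l, true) = (rowv (psi (xi R l0 C0)) k true *m G k) 0 l.
    by have [-> _] := rowv_psi (xi R l0 C0) k; rewrite mulmxKV ?uG // mxE.
  rewrite e1 mxE.
  under eq_bigr => m _ do rewrite mxE hbeta mulr_suml.
  rewrite exchange_big /=; apply: eq_bigr => q _.
  rewrite -(xi_sum hcc (a q) k l true) -ha /= mxE mulr_sumr; apply: eq_bigr => m _.
  by rewrite mxE mulrA.
have key2 : forall l C, C \in comps (M l) ->
    \sum_q beta q * a q l C = ((l == l0) && (C == C0))%:R.
  move=> l C hC; have [k ->] := comps_cl hcc hC; rewrite -key /xi.
  move: hC; case: (eqVneq l l0) => [->|hl] hC /=; last by [].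
  by rewrite (in_comp_eq hcc k true h0) eq_sym; case: (_ == _).
rewrite -(delta_sum M X h0).
transitivity (\sum_(l < L) \sum_(C in comps (M l)) \sum_q beta q * (a q l C * X l C)).
  apply: eq_bigr => l _; apply: eq_bigr => C hC.
  by rewrite -key2 // mulr_suml; apply: eq_bigr => q _; rewrite mulrA.
under eq_bigr => l _ do rewrite exchange_big /=.
rewrite exchange_big /=; apply: big1 => q _.
transitivity (beta q * \sum_(l < L) \sum_(C in comps (M l)) a q l C * X l C).
  by rewrite mulr_sumr; apply: eq_bigr => l _; rewrite mulr_sumr.
by rewrite hX mulr0.
Qed.

Lemma W_free k : row_free (W k)^T.
Proof.
apply: inj_row_free => u hu; apply/rowP => l; rewrite mxE.
pose X := fun m C => (C == cl M m k)%:R * u 0 m.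
have hX : forall q, \sum_(m < L) \sum_(C in comps (M m)) a q m C * X m C = 0.
  move=> q; transitivity ((u *m (W k)^T) 0 q); last by rewrite hu mxE.
  rewrite mxE; apply: eq_bigr => m _.
  under eq_bigr => C _ do rewrite /X mulrCA.
  by rewrite sum_delta ?cl_in // !mxE mulrC.
by have := a_inj X hX l _ (cl_in M l k); rewrite /X eqxx mul1r.
Qed.

Lemma cl_from (i j : 'I_n) (E : 'M[R]_L) :
  W j = W i *m E -> forall l, cl M l j = cl M l i.
Proof.
move=> hW l.
pose X := fun m C => ((m == l) && (C == cl M l j))%:R - (C == cl M m i)%:R * E m l.
have hX : forall q, \sum_(m < L) \sum_(C in comps (M m)) a q m C * X m C = 0.
  move=> q.
  transitivity (\sum_(m < L) \sum_(C in comps (M m))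
      ((m == l) && (C == cl M l j))%:R * a q m C -
    \sum_(m < L) \sum_(C in comps (M m)) (C == cl M m i)%:R * (a q m C * E m l)).
    rewrite -sumrB; apply: eq_bigr => m _; rewrite -sumrB; apply: eq_bigr => C _.
    by rewrite /X mulrBr mulrC mulrCA.
  rewrite (delta_sum M (fun m C => a q m C)) ?cl_in //.
  under eq_bigr => m _ do rewrite sum_delta ?cl_in //.
  have := congr1 (fun Z : 'M[R]_(ncomp M, L) => Z q l) hW.
  rewrite /= !mxE => ->; apply/eqP; rewrite subr_eq0; apply/eqP.
  by apply: eq_bigr => m _; rewrite mxE.
have := a_inj X hX l _ (cl_in M l j); rewrite /X !eqxx /=.
case: eqP => // _; rewrite mul0r subr0 => /eqP; by rewrite oner_eq0.
Qed.

Lemma main_a (i j : 'I_n) :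
  Xi_eq M i j <->
     (\rank (pinv (Zprime B j *m (Yprime B j)^T) *m (Zprime B i *m (Yprime B i)^T)) = L /\
      pinv (pinv (Zprime B i *m (Yprime B i)^T) *m (Zprime B j *m (Yprime B j)^T))
        = pinv (Zprime B j *m (Yprime B j)^T) *m (Zprime B i *m (Yprime B i)^T)).
Proof.
rewrite !KE; split.
  move=> hX.
  have e : W i = W j.
    apply/matrixP => q l; rewrite !mxE; congr (a q l _).
    have := hX l (cl M l i) (cl_in M l i) l.
    rewrite /Xi eqxx /= inE connect0 (in_comp_eq hcc j true (cl_in M l i)).
    by move/esym/eqP.
  by rewrite e; apply: LA_fwd; rewrite ?W_free ?uD.
case=> hr hp.
have hW := LA_bwd (W_free i) (W_free j) (uD i) (uD j) hr hp.
have hc := cl_from _ _ _ hW.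
move=> l C hC l'.
by rewrite /Xi (in_comp_eq hcc i true hC) (in_comp_eq hcc j true hC) hc.
Qed.

End WithA.

Lemma main_final (i j : 'I_n) :
  Xi_eq M i j <->
     (\rank (pinv (Zprime B j *m (Yprime B j)^T) *m (Zprime B i *m (Yprime B i)^T)) = L /\
      pinv (pinv (Zprime B i *m (Yprime B i)^T) *m (Zprime B j *m (Yprime B j)^T))
        = pinv (Zprime B j *m (Yprime B j)^T) *m (Zprime B i *m (Yprime B i)^T)).
Proof. by have [a ha] := exists_a; apply: (main_a _ ha). Qed.

End Main.


Unset Implicit Arguments. Set Strict Implicit.
Theorem lemma2 (R : realType) (L n : nat)
  (M : 'I_L -> 'M[R]_n) (s : 'I_L -> 'I_n -> R)
  (U V : 'I_n -> 'M[R]_(L, n)) (Sg : 'I_n -> 'M[R]_L)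
  (B : 'I_(ncomp M) -> rowidx L n -> R) (i j : 'I_n) :
  mixture M s ->
  (forall (l : 'I_L) (k : 'I_n), 0 < s l k) ->
  (forall k : 'I_n, \rank (Pmat M s k) = L) ->
  (forall k : 'I_n, \rank (Mplus M k) = L) ->
  companion_connected M ->
  coker_spanned_by_indicators M (shuffle (Pmat M s) (Qmat M s)) ->
  (forall k : 'I_n, compact_svd (Omat M s k) (U k) (Sg k) (V k)) ->
  coker_basis (shuffle U (fun k => Sg k *m V k)) B ->
  (Xi_eq M i j <->
     (\rank (pinv (Zprime B j *m (Yprime B j)^T) *m (Zprime B i *m (Yprime B i)^T)) = L /\
      pinv (pinv (Zprime B i *m (Yprime B i)^T) *m (Zprime B j *m (Yprime B j)^T))
        = pinv (Zprime B j *m (Yprime B j)^T) *m (Zprime B i *m (Yprime B i)^T))).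
Proof.
move=> _ hs hP _ hcc hcok hsvd hB.
by apply: main_final.
Qed.
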